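(* Let $R$ be a CSNC ring and let $S\subseteq R$ be a subset closed under addition, negation and multiplication which is itself a ring with an identity element $1_S$ (not necessarily equal to $1_R$). Then $S$ is a CSNC ring. In particular, for every $e\in\mathrm{Id}(R)$ the corner ring $eRe$ is a CSNC ring.
   Context: All rings are associative with identity. For a ring $R$, $\mathrm{Id}(R)$, $U(R)$, $\mathrm{Nil}(R)$ denote the sets of idempotents, units and nilpotent elements. An element $a\in R$ is clean if $a=e+u$ for some $e\in\mathrm{Id}(R)$, $u\in U(R)$. An element $a$ is strongly nil-clean if $a=e+q$ with $e\in \mathrm{Id}(R)$, $q\in\mathrm{Nil}(R)$ and $eq=qe$. A ring $R$ is called CSNC if every clean element of $R$ is strongly nil-clean. *)

(* Defs.v *)
From mathcomp Require Import all_boot all_algebra.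
Set Implicit Arguments. Unset Strict Implicit. Unset Printing Implicit Defensive.
Import GRing.Theory.
Local Open Scope ring_scope.

Definition idem (R : nzRingType) (e : R) : Prop := e * e = e.
Definition nilp (R : nzRingType) (q : R) : Prop := exists n : nat, q ^+ n = 0.

Definition is_unit (R : nzRingType) (u : R) : Prop :=
  exists v : R, u * v = 1 /\ v * u = 1.

Definition clean (R : nzRingType) (a : R) : Prop :=
  exists e u : R, idem e /\ is_unit u /\ a = e + u.
Definition strongly_nil_clean (R : nzRingType) (a : R) : Prop :=
  exists e q : R, idem e /\ nilp q /\ e * q = q * e /\ a = e + q.
Definition CSNC (R : nzRingType) : Prop :=
  forall a : R, clean a -> strongly_nil_clean a.

Definition subring_with_id (R : nzRingType) (S : R -> Prop) (o : R) : Prop :=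
  [/\ (forall x y, S x -> S y -> S (x + y)),
      (forall x, S x -> S (- x)),
      (forall x y, S x -> S y -> S (x * y)),
      S o &
      (forall x, S x -> o * x = x /\ x * o = x)].

Definition idem_in (R : nzRingType) (S : R -> Prop) (e : R) : Prop :=
  S e /\ e * e = e.
Definition unit_in (R : nzRingType) (S : R -> Prop) (o u : R) : Prop :=
  S u /\ exists v, S v /\ u * v = o /\ v * u = o.
Definition nilp_in (R : nzRingType) (S : R -> Prop) (q : R) : Prop :=
  S q /\ exists n : nat, q ^+ n = 0.
Definition clean_in (R : nzRingType) (S : R -> Prop) (o a : R) : Prop :=
  exists e u, idem_in S e /\ unit_in S o u /\ a = e + u.
Definition snc_in (R : nzRingType) (S : R -> Prop) (a : R) : Prop :=
  exists e q, idem_in S e /\ nilp_in S q /\ e * q = q * e /\ a = e + q.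
Definition CSNC_in (R : nzRingType) (S : R -> Prop) (o : R) : Prop :=
  forall a, S a -> clean_in S o a -> snc_in S a.

Definition corner (R : nzRingType) (e : R) : R -> Prop :=
  fun x => exists y : R, x = e * y * e.

(* Main.v *)
Require Import Defs.
From mathcomp Require Import all_boot all_algebra.
From mathcomp Require Import ring.
Import GRing.Theory.
Local Open Scope ring_scope.

Section Lift.
Variable (R : nzRingType) (a : R).

Definition ir : {rmorphism int -> R} := @intmul R 1.
Lemma cfu : commr_rmorph ir a.
Proof. by move=> n; apply: commr_int. Qed.
Local Notation phi := (horner_morph cfu).

Fixpoint EE (k : nat) : {poly int} :=
  if k is k'.+1 then 3 * EE k' ^+ 2 - 2 * EE k' ^+ 3 else 'X.
Definition ss : {poly int} := 'X - 'X ^+ 2.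

Lemma EE_inv k : exists W V, EE k - EE k ^+ 2 = ss ^+ (2 ^ k) * W /\ 'X - EE k = ss * V.
Proof.
elim: k => [|k [W [V [h1 h2]]]].
  by exists 1, 0; rewrite /= expn0 expr1 mulr1 mulr0 subrr.
exists (W ^+ 2 * (3 + 4 * (ss ^+ (2 ^ k) * W))).
exists (V + ss ^+ (2 ^ k).-1 * W * (1 - 2 * EE k)).
have e1 : EE k.+1 - EE k.+1 ^+ 2 = (EE k - EE k ^+2) ^+ 2 * (3 + 4 * (EE k - EE k ^+ 2)).
  rewrite /=; ring.
have e2 : 'X - EE k.+1 = ('X - EE k) + (EE k - EE k ^+ 2) * (1 - 2 * EE k).
  rewrite /=; ring.
split.
  rewrite e1 h1 expnS mul2n -addnn exprD; ring.
rewrite e2 h1 h2.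
have -> : ss ^+ (2 ^ k) = ss * ss ^+ (2 ^ k).-1.
  by rewrite -exprS prednK // expn_gt0.
ring.
Qed.

Lemma EE_X k : exists r, EE k = 'X * r.
Proof.
elim: k => [|k [r hr]]; first by exists 1; rewrite mulr1.
exists (3 * 'X * r ^+ 2 - 2 * 'X ^+ 2 * r ^+ 3); rewrite /= hr; ring.
Qed.

Lemma phiX : phi 'X = a.
Proof. exact: horner_morphX. Qed.

Lemma comm_phi p q : phi p * phi q = phi q * phi p.
Proof. by rewrite -!rmorphM mulrC. Qed.

Variable S : R -> Prop.
Hypothesis SD : forall x y, S x -> S y -> S (x + y).
Hypothesis SN : forall x, S x -> S (- x).
Hypothesis SM : forall x y, S x -> S y -> S (x * y).
Hypothesis Sa : S a.

Lemma S0 : S 0.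
Proof. by rewrite -(subrr a); apply: SD => //; apply: SN. Qed.

Lemma Sz x c : S x -> S (x *~ c).
Proof.
move=> Sx; have Sn : forall n, S (x *+ n).
  elim=> [|n IH]; first exact: S0.
  by rewrite mulrS; apply: SD.
case: c => n; first exact: Sn.
rewrite NegzE mulrNz; apply: SN; exact: Sn.
Qed.

Lemma S_phi p : S (a * phi p).
Proof.
move: p; apply: poly_ind => [|p c IH].
  by rewrite raddf0 mulr0; apply: S0.
rewrite rmorphD rmorphM /= phiX horner_morphC /= mulrDr mulrA.
apply: SD; first by apply: SM.
by rewrite mulrzr; apply: Sz.
Qed.

Lemma lift n : (a - a ^+ 2) ^+ n = 0 -> snc_in S a.
Proof.
move=> hy.
have [W [V [h1 h2]]] := EE_inv n.
have [r hr] := EE_X n.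
have ps : phi ss = a - a ^+ 2 by rewrite rmorphB rmorphXn /= phiX.
set e := phi (EE n).
have Se : S e by rewrite /e hr rmorphM /= phiX; apply: S_phi.
have hyy : (a - a ^+ 2) ^+ (2 ^ n) = 0.
  have hle := ltnW (ltn_expl n (ltnSn 1)).
  by rewrite -(subnK hle) exprD hy mulr0.
have ee : e * e = e.
  apply/eqP; rewrite eq_sym -subr_eq0 -expr2.
  by rewrite /e -rmorphXn -rmorphB /= h1 rmorphM rmorphXn /= ps hyy mul0r.
have hq : a - e = phi ('X - EE n) by rewrite rmorphB /= phiX.
exists e, (a - e); split; first by split.
split; last split.
- split; first by apply: SD => //; apply: SN.
  exists n; rewrite hq h2 rmorphM /= exprMn_comm ?ps ?hy ?mul0r //.
  by rewrite /GRing.comm -ps comm_phi.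
- by rewrite hq /e comm_phi.
- by rewrite addrC subrK.
Qed.

End Lift.

Theorem mainTheorem16 (R : nzRingType) (hR : CSNC R) :
  (forall (S : R -> Prop) (o : R), subring_with_id S o -> CSNC_in S o) /\
  (forall e : R, idem e -> CSNC_in (corner e) e).
Proof.
have part1 : forall (S : R -> Prop) (o : R), subring_with_id S o -> CSNC_in S o.
  move=> S o [SD SN SM So Sid] a Sa [e [u [[Se ee] [[Su [v [Sv [uv vu]]]] ha]]]].
  have [f fdef] : exists f, f = 1 - o by eexists.
  have oo : o * o = o by have [] := Sid o So.
  have fr : forall x, S x -> x * f = 0.
    by move=> x Sx; rewrite fdef mulrBr mulr1 (proj2 (Sid x Sx)) subrr.
  have fl : forall x, S x -> f * x = 0.
    by move=> x Sx; rewrite fdef mulrBl mul1r (proj1 (Sid x Sx)) subrr.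
  have ff : f * f = f by rewrite {1}fdef mulrBl mul1r (fr o So) subr0.
  have [b bdef] : exists b, b = a + f by eexists.
  have cb : clean b.
    exists e, (u + f); split; first exact: ee.
    split; last by rewrite bdef ha -addrA.
    exists (v + f); rewrite !mulrDr !mulrDl (fr u Su) (fl v Sv) (fr v Sv) (fl u Su).
    by rewrite uv vu ff !addr0 !add0r fdef addrC subrK.
  have [g [q [gg [[m qm] [gq hb]]]]] := hR b cb.
  set y := b - b ^+ 2.
  have hy : y = q * (1 - g *+ 2 - q).
    rewrite /y hb expr2 !mulrDr !mulrDl gg -gq mulr1 !mulrN mulrnAr -gq.
    move: (g * q) (q * q) => x z.
    by rewrite mulr2n !opprD !addrA [g + q]addrC addrK.
  have ym : y ^+ m = 0.
    rewrite hy exprMn_comm ?qm ?mul0r //.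
    by rewrite /GRing.comm !mulrBr !mulrBl !mulr1 !mul1r mulrnAr mulrnAl gq.
  have ob : o * b = a by rewrite bdef mulrDr (fr o So) addr0 (proj1 (Sid a Sa)).
  have bo : b * o = a by rewrite bdef mulrDl (fl o So) addr0 (proj2 (Sid a Sa)).
  have ab : a * b = a * a by rewrite bdef mulrDr (fr a Sa) addr0.
  have ba : b * a = a * a by rewrite bdef mulrDl (fl a Sa) addr0.
  have oy : o * y = a - a ^+ 2 by rewrite /y mulrBr expr2 mulrA ob ab.
  have yo : y * o = a - a ^+ 2 by rewrite /y mulrBl expr2 -mulrA bo ba.
  apply: (@lift R a S SD SN SM Sa m).
  by rewrite -oy exprMn_comm ?ym ?mulr0 // /GRing.comm oy yo.
split; first exact: part1.
move=> e ee; apply: part1; split.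
- by move=> x y [x' ->] [y' ->]; exists (x' + y'); rewrite mulrDr mulrDl.
- by move=> x [x' ->]; exists (- x'); rewrite mulrN mulNr.
- by move=> x y [x' ->] [y' ->]; exists (x' * e * e * y'); rewrite !mulrA.
- by exists 1; rewrite mulr1 ee.
- move=> x [x' ->]; split; first by rewrite !mulrA ee.
  by rewrite -!mulrA ee.
Qed.
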